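(* Let $\kappa,\lambda$ be infinite cardinals, $\alpha\leq\kappa^+$ an uncountable cardinal and $\beta\leq\lambda^+$ an infinite cardinal. If there is an injective group homomorphism $j:P(\kappa,\alpha)\to P(\lambda,\beta)$, then, writing $j_\nu=p_\nu\circ j$ for $\nu\in\lambda$ (where $p_\nu$ is the $\nu$-th coordinate projection) and $F_\nu=\{\xi\in\kappa:j_\nu(e_\xi)\neq0\}$, each $F_\nu$ is finite and $\kappa\leq|\{\nu\in\lambda:F_\nu\neq\varnothing\}|$; in particular $\kappa\leq\lambda$.
   Context: $\mathbb{Z}^\kappa$ is the group of functions $x:\kappa\to\mathbb{Z}$ under pointwise addition, $\mathrm{supp}(x)=\{\xi\in\kappa:x(\xi)\neq0\}$, and $P(\kappa,\alpha)=\{x\in\mathbb{Z}^\kappa:|\mathrm{supp}(x)|<\alpha\}$. For $\xi\in\kappa$, $e_\xi$ is the function with $e_\xi(\xi)=1$ and $e_\xi(\eta)=0$ for $\eta\neq\xi$. For $\nu\in\lambda$, $p_\nu:P(\lambda,\beta)\to\mathbb{Z}$ is $p_\nu(y)=y(\nu)$. *)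

(* Defs.v *)
(* Cardinals are represented by types (a cardinal = the
   cardinality of a type); cardinal comparison by injections. *)
From Stdlib Require Import ZArith List ClassicalEpsilon.
Open Scope Z_scope.

Definition allT (X : Type) : X -> Prop := fun _ => True.

Definition card_le {X Y : Type} (P : X -> Prop) (Q : Y -> Prop) : Prop :=
  exists f : X -> Y, (forall x, P x -> Q (f x)) /\
    (forall x y, P x -> P y -> f x = f y -> x = y).

Definition card_lt {X Y : Type} (P : X -> Prop) (Q : Y -> Prop) : Prop :=
  card_le P Q /\ ~ card_le Q P.

Definition infinite_type (X : Type) : Prop := card_le (allT nat) (allT X).
Definition uncountable_type (X : Type) : Prop := ~ card_le (allT X) (allT nat).

(* |A| <= |K|^+  <->  every cardinal below |A| is <= |K| *)
Definition le_succ_card (A K : Type) : Prop :=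
  forall S : A -> Prop, card_lt S (allT A) -> card_le S (allT K).

Definition finite_set {X : Type} (F : X -> Prop) : Prop :=
  exists l : list X, forall x, F x -> In x l.

Definition supp {K : Type} (x : K -> Z) : K -> Prop := fun k => x k <> 0.

Definition inP (K A : Type) (x : K -> Z) : Prop := card_lt (supp x) (allT A).

Definition addf {K : Type} (x y : K -> Z) : K -> Z := fun k => x k + y k.

Definition unitv {K : Type} (xi : K) : K -> Z :=
  fun eta => if excluded_middle_informative (xi = eta) then 1 else 0.

Definition Fset {K L : Type} (j : (K -> Z) -> (L -> Z)) (nu : L) : K -> Prop :=
  fun xi => j (unitv xi) nu <> 0.

(* Main.v *)
Require Import Defs.
From Stdlib Require Import ZArith List Lia FunctionalExtensionality ClassicalEpsilon Classical Cantor FinFun PropExtensionality.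
From mathcomp Require classical_sets.
Local Open Scope nat_scope.

Lemma card_le_trans {X Y W : Type} (P : X -> Prop) (Q : Y -> Prop) (R : W -> Prop) :
  card_le P Q -> card_le Q R -> card_le P R.
Proof.
  intros [f [Hf1 Hf2]] [g [Hg1 Hg2]]. exists (fun x => g (f x)). split.
  - intros x Hx. apply Hg1, Hf1, Hx.
  - intros x y Hx Hy E. apply Hf2; auto.
Qed.

Lemma card_le_sub {X : Type} (P Q : X -> Prop) : (forall x, P x -> Q x) -> card_le P Q.
Proof. intros H. exists (fun x => x). split; auto. Qed.

Fixpoint pos {X : Type} (x : X) (l : list X) : nat :=
  match l with
  | nil => 0
  | y :: l' => if excluded_middle_informative (y = x) then 0 else S (pos x l')
  end.

Lemma pos_inj {X : Type} (l : list X) x y : In x l -> In y l -> pos x l = pos y l -> x = y.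
Proof.
  induction l as [|a l IH]; simpl; [tauto|].
  intros Hx Hy E.
  destruct (excluded_middle_informative (a = x)); destruct (excluded_middle_informative (a = y)).
  - congruence.
  - discriminate.
  - discriminate.
  - injection E; intro E'. apply IH; auto.
    + destruct Hx; [contradiction|auto].
    + destruct Hy; [contradiction|auto].
Qed.

Lemma finite_card_le_nat {X : Type} (F : X -> Prop) : finite_set F -> card_le F (allT nat).
Proof.
  intros [l Hl]. exists (fun x => pos x l). split.
  - intros; exact I.
  - intros x y Hx Hy E. apply (pos_inj l); auto.
Qed.

Lemma no_inj_seq_in_list {X : Type} (s : nat -> X) (l : list X) :
  (forall n m, s n = s m -> n = m) -> (forall n, In (s n) l) -> False.
Proof.
  intros Hinj Hin.
  assert (H : NoDup (map s (seq 0 (S (length l))))).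
  { apply FinFun.Injective_map_NoDup. intros a b; apply Hinj. apply seq_NoDup. }
  apply NoDup_incl_length with (l' := l) in H.
  - rewrite length_map, length_seq in H. lia.
  - intros y Hy. apply in_map_iff in Hy. destruct Hy as [n [<- _]]. apply Hin.
Qed.

Lemma seq_or_finite {X : Type} (F : X -> Prop) :
  ~ finite_set F -> exists s : nat -> X, (forall n, F (s n)) /\ (forall n m, s n = s m -> n = m).
Proof.
  intros Hnf.
  assert (Hex : forall l : list X, exists x, F x /\ ~ In x l).
  { intros l. apply NNPP. intros Hno. apply Hnf. exists l. intros x Fx.
    destruct (classic (In x l)) as [H|H]; auto. exfalso. apply Hno. exists x; auto. }
  pose (pick := fun l => proj1_sig (constructive_indefinite_description _ (Hex l))).
  assert (Hpick : forall l, F (pick l) /\ ~ In (pick l) l).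
  { intros l. exact (proj2_sig (constructive_indefinite_description _ (Hex l))). }
  pose (g := fix g (n : nat) : list X := match n with 0 => nil | S n => pick (g n) :: g n end).
  exists (fun n => pick (g n)). split.
  - intros n. apply Hpick.
  - assert (Hmem : forall m n, m < n -> In (pick (g m)) (g n)).
    { intros m n. induction n; intros H; [lia|]. simpl.
      destruct (Nat.eq_dec m n); [subst; left; reflexivity|]. right. apply IHn. lia. }
    intros n m E. destruct (Nat.lt_trichotomy n m) as [H|[H|H]]; auto.
    + exfalso. apply (proj2 (Hpick (g m))). rewrite <- E. apply Hmem; auto.
    + exfalso. apply (proj2 (Hpick (g n))). rewrite E. apply Hmem; auto.
Qed.

Lemma my_zorn (T : Type) (P : (T -> Prop) -> Prop) :
  (forall F : (T -> Prop) -> Prop, (forall X, F X -> P X) ->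
     (forall X Y, F X -> F Y -> (forall t, X t -> Y t) \/ (forall t, Y t -> X t)) ->
     P (fun a => exists X, F X /\ X a)) ->
  exists G, P G /\ forall H, (forall t, G t -> H t) -> (exists t, H t /\ ~ G t) -> ~ P H.
Proof.
  intros Hch.
  destruct (@classical_sets.Zorn_bigcup T P) as [G [PG HG]].
  - intros F HFP Htot. 
    assert (E : classical_sets.bigcup F (fun X => X) = (fun a => exists X, F X /\ X a)).
    { apply functional_extensionality. intros a. apply propositional_extensionality.
      unfold classical_sets.bigcup, classical_sets.mkset. split.
      - intros [X FX Xa]. eauto.
      - intros [X [FX Xa]]. exists X; auto. }
    rewrite E. apply Hch. { intros X FX. exact (HFP X FX). } intros X Y FX FY. exact (Htot X Y FX FY).
  - exists G. split; auto. intros H HGH [t [Ht Gt]]. apply HG. split.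
    + exact HGH.
    + intros Hsub. apply Gt, Hsub, Ht.
Qed.

Lemma to_nat_inj p q : to_nat p = to_nat q -> p = q.
Proof. intros E. rewrite <- (cancel_of_to p), <- (cancel_of_to q), E. reflexivity. Qed.

Lemma card_sq {X : Type} (I : X -> Prop) :
  card_le (allT nat) I -> card_le (fun p : X * nat => I (fst p)) I.
Proof.
  intros HnI.
  pose (Good := fun G : (X * nat) * X -> Prop =>
   (forall p y y', G (p,y) -> G (p,y') -> y = y') /\
   (forall p p' y, G (p,y) -> G (p',y) -> p = p') /\
   (forall p, (exists y, G (p,y)) <-> (exists q, G (q, fst p))) /\
   (forall p y, G (p,y) -> I y)).
  destruct (my_zorn _ Good) as [G0 [HG0 Hmax]].
  { intros F HF Htot. split; [|split; [|split]].
    - intros p y y' [G1 [F1 H1]] [G2 [F2 H2]].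
      destruct (Htot G1 G2 F1 F2) as [S|S].
      + apply (proj1 (HF G2 F2) p); auto.
      + apply (proj1 (HF G1 F1) p); auto.
    - intros p p' y [G1 [F1 H1]] [G2 [F2 H2]].
      destruct (Htot G1 G2 F1 F2) as [S|S].
      + apply (proj1 (proj2 (HF G2 F2)) p p' y); auto.
      + apply (proj1 (proj2 (HF G1 F1)) p p' y); auto.
    - intros p. split.
      + intros [y [G1 [F1 H1]]].
        destruct (proj1 (proj1 (proj2 (proj2 (HF G1 F1))) p) (ex_intro _ y H1)) as [q Hq].
        exists q, G1; auto.
      + intros [q [G1 [F1 H1]]].
        destruct (proj2 (proj1 (proj2 (proj2 (HF G1 F1))) p) (ex_intro _ q H1)) as [y Hy].
        exists y, G1; auto.
    - intros p y [G1 [F1 H1]]. apply (proj2 (proj2 (proj2 (HF G1 F1))) p y H1). }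
  destruct HG0 as [Gf [Gi [Gd Gr]]].
  pose (D := fun y => exists q, G0 (q, y)).
  assert (Efin : finite_set (fun y => I y /\ ~ D y)).
  { apply NNPP. intros Hnf. destruct (seq_or_finite _ Hnf) as [c [Hc Hcinj]].
    pose (G' := fun a : (X * nat) * X => G0 a \/ exists n m, a = ((c n, m), c (to_nat (n, m)))).
    apply (Hmax G').
    - intros t Ht; left; exact Ht.
    - exists ((c 0, 0), c (to_nat (0, 0))). split.
      + right. exists 0, 0. reflexivity.
      + intros H0. apply (proj2 (Hc 0)).
        destruct (proj1 (Gd (c 0, 0)) (ex_intro _ _ H0)) as [q Hq]. exists q; exact Hq.
    - assert (Hnd : forall p y n, G0 (p, y) -> fst p = c n -> False).
      { intros p y n H E. apply (proj2 (Hc n)). rewrite <- E.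
        destruct (proj1 (Gd p) (ex_intro _ y H)) as [q Hq]. exists q; exact Hq. }
      assert (Hnr : forall p y n, G0 (p, y) -> y = c n -> False).
      { intros p y n H E. apply (proj2 (Hc n)). rewrite <- E. exists p; exact H. }
      split; [|split; [|split]].
      + intros p y y' [H1|[n [m E1]]] [H2|[n' [m' E2]]].
        * eapply Gf; eauto.
        * injection E2 as Ep Ey. exfalso. apply (Hnd p y n'); auto. rewrite Ep; reflexivity.
        * injection E1 as Ep Ey. exfalso. apply (Hnd p y' n); auto. rewrite Ep; reflexivity.
        * injection E1 as Ep Ey. injection E2 as Ep' Ey'. subst p.
          injection Ep' as Ec Em. apply Hcinj in Ec. subst. reflexivity.
      + intros p p' y [H1|[n [m E1]]] [H2|[n' [m' E2]]].
        * eapply Gi; eauto.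
        * injection E2 as Ep Ey. exfalso. apply (Hnr p y _ H1 Ey).
        * injection E1 as Ep Ey. exfalso. apply (Hnr p' y _ H2 Ey).
        * injection E1 as Ep Ey. injection E2 as Ep' Ey'.
          rewrite Ey in Ey'. apply Hcinj in Ey'. apply (to_nat_inj (n, m) (n', m')) in Ey'. injection Ey' as En Em. subst. reflexivity.
      + intros [x k]. simpl. split.
        * intros [y [H|[n [m E]]]].
          -- destruct (proj1 (Gd (x, k)) (ex_intro _ y H)) as [q Hq]. exists q. left. exact Hq.
          -- injection E as Ec Em Ey. subst.
             destruct (of_nat n) as [n0 m0] eqn:En.
             exists (c n0, m0). right. exists n0, m0. f_equal.
             rewrite <- En, cancel_to_of. reflexivity.
        * intros [q [H|[n [m E]]]].
          -- destruct (proj2 (Gd (x, k)) (ex_intro _ q H)) as [y Hy]. exists y. left. exact Hy.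
          -- injection E as Eq Ex. subst.
             exists (c (to_nat (to_nat (n, m), k))). right. exists (to_nat (n, m)), k. reflexivity.
      + intros p y [H|[n [m E]]].
        * eapply Gr; eauto.
        * injection E as Ep Ey. subst. apply Hc. }
  destruct Efin as [lE HlE].
  assert (Hd0 : exists d0, D d0).
  { apply NNPP. intros Hno. destruct HnI as [s [Hs Hsinj]].
    apply (no_inj_seq_in_list s lE).
    - intros n m E. apply Hsinj; auto; exact Logic.I.
    - intros n. apply HlE. split; [apply Hs; exact Logic.I|]. intros Hd. apply Hno. exists (s n); exact Hd. }
  destruct Hd0 as [d0 Hd0].
  pose (G0f := fun p => match excluded_middle_informative (exists y, G0 (p, y)) with
                | left H => proj1_sig (constructive_indefinite_description _ H)
                | right _ => fst p end).
  assert (HG0f : forall p, (exists y, G0 (p, y)) -> G0 (p, G0f p)).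
  { intros p H. unfold G0f. destruct (excluded_middle_informative _) as [H'|H'].
    - exact (proj2_sig (constructive_indefinite_description _ H')).
    - contradiction. }
  assert (HD : forall x m, D x -> G0 ((x, m), G0f (x, m))).
  { intros x m Hx. apply HG0f. apply (proj2 (Gd (x, m))). exact Hx. }
  exists (fun p : X * nat => let (x, n) := p in
            if excluded_middle_informative (D x) then G0f (x, 2 * n)
            else G0f (d0, S (2 * to_nat (pos x lE, n)))).
  split.
  - intros [x n] Hx. simpl in Hx |- *. destruct (excluded_middle_informative (D x)).
    + eapply Gr. apply HD. auto.
    + eapply Gr. apply HD. auto.
  - intros [x n] [x' n'] Hx Hx'. simpl in Hx, Hx'.
    destruct (excluded_middle_informative (D x)) as [Dx|Dx];
    destruct (excluded_middle_informative (D x')) as [Dx'|Dx']; intros E.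
    + pose proof (HD x (2*n) Dx) as H1. pose proof (HD x' (2*n') Dx') as H2.
      rewrite E in H1. pose proof (Gi _ _ _ H1 H2) as E2. injection E2; intros. 
      f_equal; [assumption|lia].
    + pose proof (HD x (2*n) Dx) as H1. pose proof (HD d0 (S (2 * to_nat (pos x' lE, n'))) Hd0) as H2.
      rewrite E in H1. pose proof (Gi _ _ _ H1 H2) as E2. injection E2; intros. lia.
    + pose proof (HD x' (2*n') Dx') as H1. pose proof (HD d0 (S (2 * to_nat (pos x lE, n))) Hd0) as H2.
      rewrite <- E in H1. pose proof (Gi _ _ _ H1 H2) as E2. injection E2; intros. lia.
    + pose proof (HD d0 (S (2 * to_nat (pos x lE, n))) Hd0) as H1.
      pose proof (HD d0 (S (2 * to_nat (pos x' lE, n'))) Hd0) as H2.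
      rewrite E in H1. pose proof (Gi _ _ _ H1 H2) as E2. assert (E4 : to_nat (pos x lE, n) = to_nat (pos x' lE, n')).
      { remember (to_nat (pos x lE, n)) as a1. remember (to_nat (pos x' lE, n')) as a2.
        injection E2 as E3. lia. }
      apply to_nat_inj in E4. injection E4; intros En Ep.
      f_equal; [|assumption]. apply (pos_inj lE); auto.
Qed.
Local Open Scope Z_scope.

Fixpoint mkMT (a : nat -> Z) (k : nat) : Z * Z :=
  match k with
  | O => (1, 0)
  | S k => let (m, t) := mkMT a k in
           (m * (2 * (t + m * Z.abs (a k)) + 2), t + m * Z.abs (a k))
  end.
Definition MM a k := fst (mkMT a k).
Definition TT a k := snd (mkMT a k).
Definition rr a k := 2 * TT a (S k) + 2.
Fixpoint QQ a (k d : nat) : Z :=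
  match d with O => 1 | S d => rr a k * QQ a (S k) d end.
Fixpoint ss a (k : nat) : Z :=
  match k with O => 0 | S k => ss a k + MM a k * a k end.

Lemma MM_S a k : MM a (S k) = MM a k * rr a k.
Proof. unfold MM, rr, TT. simpl. destruct (mkMT a k). reflexivity. Qed.
Lemma TT_S a k : TT a (S k) = TT a k + MM a k * Z.abs (a k).
Proof. unfold MM, TT. simpl. destruct (mkMT a k). reflexivity. Qed.
Lemma MM_0 a : MM a 0 = 1. Proof. reflexivity. Qed.
Lemma TT_0 a : TT a 0 = 0. Proof. reflexivity. Qed.

Lemma bounds a k : 1 <= MM a k /\ 0 <= TT a k /\ 2 * TT a k < MM a k /\ Z.of_nat k + 1 <= MM a k
  /\ Z.abs (ss a k) <= TT a k.
Proof.
  induction k as [|k IH].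
  - rewrite MM_0, TT_0. simpl. lia.
  - destruct IH as [H1 [H2 [H3 [H4 H5]]]].
    assert (HT : TT a (S k) = TT a k + MM a k * Z.abs (a k)) by apply TT_S.
    assert (HM : MM a (S k) = MM a k * (2 * TT a (S k) + 2)) by (rewrite MM_S; reflexivity).
    assert (0 <= MM a k * Z.abs (a k)) by (apply Z.mul_nonneg_nonneg; lia).
    assert (MM a k * (2 * TT a (S k) + 2) >= 2 * TT a (S k) + 2) by nia.
    assert (MM a k * (2 * TT a (S k) + 2) >= 2 * MM a k) by nia.
    simpl ss. rewrite Nat2Z.inj_succ.
    assert (Z.abs (MM a k * a k) = MM a k * Z.abs (a k)) by (rewrite Z.abs_mul; f_equal; lia).
    lia.
Qed.

Lemma uncount_inf (A : Type) : uncountable_type A -> card_le (allT nat) (allT A).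
Proof.
  intros hA. destruct (classic (finite_set (allT A))) as [Hf|Hnf].
  - exfalso. apply hA. apply finite_card_le_nat, Hf.
  - destruct (seq_or_finite _ Hnf) as [s [_ Hs]]. exists s. split; [intros; exact I|].
    intros; auto.
Qed.

Lemma inP_countable (K A : Type) (x : K -> Z) :
  uncountable_type A -> card_le (supp x) (allT nat) -> inP K A x.
Proof.
  intros hA H. split.
  - eapply card_le_trans; [exact H|]. apply uncount_inf, hA.
  - intros H'. apply hA. eapply card_le_trans; eauto.
Qed.

Definition vecs {K : Type} (s : nat -> K) (c : nat -> Z) : K -> Z :=
  fun xi => match excluded_middle_informative (exists n, s n = xi) with
            | left H => c (proj1_sig (constructive_indefinite_description _ H))
            | right _ => 0 end.

Lemma vecs_at {K : Type} (s : nat -> K) c n :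
  (forall n m, s n = s m -> n = m) -> vecs s c (s n) = c n.
Proof.
  intros Hs. unfold vecs. destruct (excluded_middle_informative _) as [H|H].
  - f_equal. apply Hs. exact (proj2_sig (constructive_indefinite_description _ H)).
  - exfalso. apply H. exists n; reflexivity.
Qed.

Lemma vecs_off {K : Type} (s : nat -> K) c xi :
  ~ (exists n, s n = xi) -> vecs s c xi = 0.
Proof.
  intros H. unfold vecs. destruct (excluded_middle_informative _) as [H'|H']; [contradiction|reflexivity].
Qed.

Definition scal {K : Type} (c : Z) (x : K -> Z) : K -> Z := fun xi => c * x xi.
Definition zerof {K : Type} : K -> Z := fun _ => 0.

Lemma j_zero (K L A : Type) (j : (K -> Z) -> (L -> Z))
  (hA : uncountable_type A)
  (hjadd : forall x y, inP K A x -> inP K A y -> j (addf x y) = addf (j x) (j y)) :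
  j zerof = zerof.
Proof.
  assert (HP : inP K A zerof).
  { apply inP_countable; auto. exists (fun _ => O). split; [intros; exact I|].
    intros x y Hx. exfalso. apply Hx. reflexivity. }
  pose proof (hjadd _ _ HP HP) as E.
  assert (E2 : addf (@zerof K) zerof = zerof).
  { apply functional_extensionality. intros. unfold addf, zerof. lia. }
  rewrite E2 in E. apply functional_extensionality. intros nu.
  pose proof (f_equal (fun f => f nu) E) as E3. simpl in E3. unfold addf in E3.
  unfold zerof at 2. lia.
Qed.

Lemma specker (K L A : Type) (j : (K -> Z) -> (L -> Z))
  (hA : uncountable_type A)
  (hjadd : forall x y, inP K A x -> inP K A y -> j (addf x y) = addf (j x) (j y))
  (nu : L) : finite_set (Fset j nu).
Proof.
  apply NNPP. intros Hnf. destruct (seq_or_finite _ Hnf) as [s [HF Hs]].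
  pose (V := fun x : K -> Z => forall xi, x xi <> 0 -> exists n, s n = xi).
  assert (HVP : forall x, V x -> inP K A x).
  { intros x Hx. apply inP_countable; auto.
    exists (fun xi => match excluded_middle_informative (exists n, s n = xi) with
            | left H => proj1_sig (constructive_indefinite_description _ H)
            | right _ => O end).
    split; [intros; exact I|].
    intros x1 x2 H1 H2 E.
    destruct (excluded_middle_informative (exists n, s n = x1)) as [G1|G1];
    [|exfalso; apply G1, Hx, H1].
    destruct (excluded_middle_informative (exists n, s n = x2)) as [G2|G2];
    [|exfalso; apply G2, Hx, H2].
    rewrite <- (proj2_sig (constructive_indefinite_description _ G1)).
    rewrite <- (proj2_sig (constructive_indefinite_description _ G2)).
    rewrite E. reflexivity. }
  assert (Hjz := j_zero K L A j hA hjadd).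
  assert (Hscal : forall (m : nat) x, V x -> forall nu', j (scal (Z.of_nat m) x) nu' = Z.of_nat m * j x nu').
  { intros m x Hx. induction m as [|m IH]; intros nu'.
    - assert (E : scal (Z.of_nat 0) x = zerof).
      { apply functional_extensionality; intros; unfold scal, zerof; simpl; lia. }
      rewrite E, Hjz. unfold zerof. lia.
    - assert (E : scal (Z.of_nat (S m)) x = addf x (scal (Z.of_nat m) x)).
      { apply functional_extensionality; intros; unfold scal, addf; lia. }
      assert (Vs : V (scal (Z.of_nat m) x)).
      { intros xi Hxi. apply Hx. unfold scal in Hxi. intros E'. apply Hxi. rewrite E'. lia. }
      rewrite E, hjadd; auto. unfold addf. rewrite IH. lia. }
  pose (a := fun n => j (unitv (s n)) nu).
  assert (Ha : forall n, a n <> 0) by (intros n; apply HF).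
  pose (y := fun k : nat => vecs s (fun n => if (n <? k)%nat then 0 else QQ a k (n - k))).
  assert (Vy : forall k, V (y k)).
  { intros k xi H. apply NNPP. intros H'. apply H. apply vecs_off, H'. }
  assert (Vu : forall k, V (unitv (s k))).
  { intros k xi H. exists k. unfold unitv in H.
    destruct (excluded_middle_informative (s k = xi)); [auto|]. exfalso; apply H; reflexivity. }
  assert (Hrr : forall k, 0 <= rr a k).
  { intros k. unfold rr. pose proof (bounds a (S k)). lia. }
  assert (Hrel : forall k, y k = addf (unitv (s k)) (scal (rr a k) (y (S k)))).
  { intros k. apply functional_extensionality. intros xi. unfold addf, scal.
    destruct (classic (exists n, s n = xi)) as [[n <-]|Hn].
    - unfold y. rewrite !vecs_at by exact Hs. unfold unitv.
      destruct (excluded_middle_informative (s k = s n)) as [E|E].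
      + apply Hs in E. subst n. rewrite Nat.ltb_irrefl.
        assert (Hl : (k <? S k)%nat = true) by (apply Nat.ltb_lt; lia). rewrite Hl.
        rewrite Nat.sub_diag. simpl QQ. lia.
      + destruct (Nat.lt_trichotomy n k) as [Hlt|[Heq|Hgt]].
        * assert (H1 : (n <? k)%nat = true) by (apply Nat.ltb_lt; lia).
          assert (H2 : (n <? S k)%nat = true) by (apply Nat.ltb_lt; lia).
          rewrite H1, H2. lia.
        * subst. exfalso. apply E. reflexivity.
        * assert (H1 : (n <? k)%nat = false) by (apply Nat.ltb_ge; lia).
          assert (H2 : (n <? S k)%nat = false) by (apply Nat.ltb_ge; lia).
          rewrite H1, H2.
          replace (n - k)%nat with (S (n - S k)) by lia. simpl. lia.
    - unfold y. rewrite !vecs_off by exact Hn. unfold unitv.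
      destruct (excluded_middle_informative (s k = xi)) as [E|E].
      + exfalso. apply Hn. exists k; exact E.
      + lia. }
  pose (t := fun k => j (y k) nu).
  assert (Ht : forall k, t k = a k + rr a k * t (S k)).
  { intros k. unfold t. rewrite (Hrel k) at 1. rewrite hjadd.
    - unfold addf. rewrite <- (Z2Nat.id (rr a k)) by auto. rewrite Hscal by auto. reflexivity.
    - apply HVP, Vu.
    - apply HVP. intros xi H. apply (Vy (S k)). unfold scal in H. intros E. apply H. rewrite E. lia. }
  assert (Hinv : forall k, t O = ss a k + MM a k * t k).
  { induction k as [|k IH].
    - unfold ss. rewrite MM_0. lia.
    - rewrite IH, Ht. simpl ss. rewrite MM_S. ring. }
  assert (Hzero : forall k, (Z.to_nat (2 * Z.abs (t O)) <= k)%nat -> t k = 0).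
  { intros k Hk. pose proof (bounds a k) as [B1 [B2 [B3 [B4 B5]]]].
    pose proof (Hinv k) as E.
    assert (Hx : 2 * Z.abs (t O) < MM a k).
    { assert (Z.of_nat (Z.to_nat (2 * Z.abs (t O))) <= Z.of_nat k) by (apply Nat2Z.inj_le; exact Hk).
      rewrite Z2Nat.id in H by lia. lia. }
    destruct (Z.lt_trichotomy (t k) 0) as [Hn|[Hz|Hp]]; [exfalso|exact Hz|exfalso]; nia. }
  set (k0 := Z.to_nat (2 * Z.abs (t O))).
  pose proof (Ht k0) as E. rewrite (Hzero k0), (Hzero (S k0)) in E by lia.
  apply (Ha k0). lia.
Qed.

Theorem mainTheorem9 (K L A B : Type)
  (hK : infinite_type K) (hL : infinite_type L)
  (hA : uncountable_type A) (hAK : le_succ_card A K)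
  (hB : infinite_type B) (hBL : le_succ_card B L)
  (j : (K -> Z) -> (L -> Z))
  (hjP : forall x, inP K A x -> inP L B (j x))
  (hjadd : forall x y, inP K A x -> inP K A y -> j (addf x y) = addf (j x) (j y))
  (hjinj : forall x y, inP K A x -> inP K A y -> j x = j y -> x = y) :
  (forall nu : L, finite_set (Fset j nu)) /\
  card_le (allT K) (fun nu : L => exists xi, Fset j nu xi) /\
  card_le (allT K) (allT L).
Proof.
  assert (Hfin : forall nu : L, finite_set (Fset j nu)) by (intros; eapply specker; eauto).
  assert (Hjz := j_zero K L A j hA hjadd).
  assert (HPz : inP K A zerof).
  { apply inP_countable; auto. exists (fun _ => O). split; [intros; exact I|].
    intros x y Hx. exfalso. apply Hx. reflexivity. }
  assert (HPu : forall xi, inP K A (unitv xi)).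
  { intros xi. apply inP_countable; auto. exists (fun _ => O). split; [intros; exact I|].
    intros x y Hx Hy _. unfold supp, unitv in Hx, Hy.
    destruct (excluded_middle_informative (xi = x)); [|exfalso; apply Hx; reflexivity].
    destruct (excluded_middle_informative (xi = y)); [|exfalso; apply Hy; reflexivity].
    congruence. }
  assert (Hex : forall xi, exists nu, Fset j nu xi).
  { intros xi. apply NNPP. intros Hno.
    assert (E : j (unitv xi) = j zerof).
    { rewrite Hjz. apply functional_extensionality. intros nu. unfold zerof.
      apply NNPP. intros H. apply Hno. exists nu. exact H. }
    apply hjinj in E; auto.
    pose proof (f_equal (fun f => f xi) E) as E2. simpl in E2. unfold unitv, zerof in E2.
    destruct (excluded_middle_informative (xi = xi)); [discriminate|auto]. }
  pose (f := fun xi => proj1_sig (constructive_indefinite_description _ (Hex xi))).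
  assert (Hf : forall xi, Fset j (f xi) xi).
  { intros xi. exact (proj2_sig (constructive_indefinite_description _ (Hex xi))). }
  pose (lst := fun nu => proj1_sig (constructive_indefinite_description _ (Hfin nu))).
  assert (Hlst : forall nu xi, Fset j nu xi -> In xi (lst nu)).
  { intros nu. exact (proj2_sig (constructive_indefinite_description _ (Hfin nu))). }
  pose (Im := fun nu => exists xi, f xi = nu).
  assert (H1 : card_le (allT K) (fun p : L * nat => Im (fst p))).
  { exists (fun xi => (f xi, pos xi (lst (f xi)))). split.
    - intros xi _. exists xi. reflexivity.
    - intros x y _ _ E. injection E as Ef Ep. rewrite Ef in Ep.
      apply (pos_inj (lst (f y))); [rewrite <- Ef; apply Hlst, Hf | apply Hlst, Hf | exact Ep]. }
  assert (HIm : card_le (allT nat) Im).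
  { destruct (classic (finite_set Im)) as [[lI HlI]|Hnf].
    - exfalso. destruct hK as [s [_ Hs]].
      apply (no_inj_seq_in_list s (flat_map lst lI)).
      + intros n m E. apply Hs; auto; exact I.
      + intros n. apply in_flat_map. exists (f (s n)). split.
        * apply HlI. exists (s n). reflexivity.
        * apply Hlst, Hf.
    - destruct (seq_or_finite _ Hnf) as [s [Hs1 Hs2]]. exists s. split; auto. }
  assert (H2 : card_le (allT K) Im) by (eapply card_le_trans; [exact H1|apply card_sq, HIm]).
  assert (H3 : card_le (allT K) (fun nu : L => exists xi, Fset j nu xi)).
  { eapply card_le_trans; [exact H2|]. apply card_le_sub. intros nu [xi <-]. exists xi. apply Hf. }
  split; [exact Hfin|split; [exact H3|]].
  eapply card_le_trans; [exact H3|]. apply card_le_sub. intros; exact I.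
Qed.
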